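(* (1) The full subcategory $\mathbf{T_D MT_P}$ of $\mathbf{MT_P}$ consisting of $T_D$-algebras is equivalent to $\mathbf{MT_P}$ (the inclusion functor being an equivalence). (2) $\mathbf{Frm}$ is equivalent to $\mathbf{T_D MT_P}$.
   Context: An MT-algebra is a pair $(M,\square)$ where $M$ is a complete boolean algebra and $\square:M\to M$ satisfies $\square 1=1$, $\square(a\wedge b)=\square a\wedge\square b$, $\square a\le a$, $\square a\le\square\square a$; $\Diamond a=\neg\square\neg a$; open: $\square a=a$; locally closed: $a=\square b\wedge\Diamond c$; $\mathcal O M$, $\mathcal{LC}M$ the sets of open and locally closed elements ($\mathcal O M$ is a frame). $M$ is a $T_D$-algebra if every element of $M$ is a join of locally closed elements. A proximity morphism $f:M\to N$ is a map with (P1) $f|_{\mathcal O M}:\mathcal O M\to\mathcal O N$ a frame morphism; (P2) $f(a\wedge b)=f(a)\wedge f(b)$; (P3) $f(\bigvee S)=\bigvee f[S]$ for finite $S\subseteq\mathcal{LC}M$; (P4) $f(a)=\bigvee\{f(x):x\in\mathcal{LC}M, x\le a\}$. $\mathbf{MT_P}$ is the category of MT-algebras and proximity morphisms with composition $(g\star f)(a)=\bigvee\{g(f(x)):x\in\mathcal{LC}M_1,x\le a\}$ and identities $1_M(a)=\bigvee\{x\in\mathcal{LC}M:x\le a\}$. $\mathbf{Frm}$ is the category of frames and frame morphisms. *)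

(* Defs.v *)
From Stdlib Require Import List.
Set Implicit Arguments.

Definition img {A B : Type} (f : A -> B) (S : A -> Prop) : B -> Prop :=
  fun y => exists x, S x /\ y = f x.

Record CBA : Type := {
  cb_car :> Type;
  le : cb_car -> cb_car -> Prop;
  le_refl : forall a, le a a;
  le_antisym : forall a b, le a b -> le b a -> a = b;
  le_trans : forall a b c, le a b -> le b c -> le a c;
  top : cb_car;
  bot : cb_car;
  meet : cb_car -> cb_car -> cb_car;
  join : cb_car -> cb_car -> cb_car;
  neg : cb_car -> cb_car;
  Sup : (cb_car -> Prop) -> cb_car;
  top_max : forall a, le a top;
  bot_min : forall a, le bot a;
  meet_glb : forall x a b, le x (meet a b) <-> le x a /\ le x b;
  join_lub : forall a b x, le (join a b) x <-> le a x /\ le b x;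
  Sup_lub : forall S x, le (Sup S) x <-> (forall s, S s -> le s x);
  meet_join_distr : forall a b c, meet a (join b c) = join (meet a b) (meet a c);
  compl_meet : forall a, meet a (neg a) = bot;
  compl_join : forall a, join a (neg a) = top
}.
Arguments le {_}. Arguments top {_}. Arguments bot {_}. Arguments meet {_}.
Arguments join {_}. Arguments neg {_}. Arguments Sup {_}.

Record MTAlg : Type := {
  mt_cba :> CBA;
  box : mt_cba -> mt_cba;
  box_top : box top = top;
  box_meet : forall a b, box (meet a b) = meet (box a) (box b);
  box_defl : forall a, le (box a) a;
  box_idem : forall a, le (box a) (box (box a))
}.
Arguments box {_}.

Definition dia {M : MTAlg} (a : M) : M := neg (box (neg a)).
Definition is_open {M : MTAlg} (a : M) : Prop := box a = a.
Definition is_LC {M : MTAlg} (a : M) : Prop :=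
  exists b c : M, a = meet (box b) (dia c).

Definition is_TD (M : MTAlg) : Prop :=
  forall a : M, exists S : M -> Prop, (forall x, S x -> is_LC x) /\ a = Sup S.

(* (P1): the restriction of f to O M is a frame morphism O M -> O N.
   The frame operations of O M (top, binary meet, arbitrary joins)
   coincide with those of M, so this is written out directly. *)
Definition P1 {M N : MTAlg} (f : M -> N) : Prop :=
  (forall a : M, is_open a -> is_open (f a)) /\
  f top = top /\
  (forall a b : M, is_open a -> is_open b -> f (meet a b) = meet (f a) (f b)) /\
  (forall S : M -> Prop, (forall s, S s -> is_open s) -> f (Sup S) = Sup (img f S)).

Definition P2 {M N : MTAlg} (f : M -> N) : Prop :=
  forall a b : M, f (meet a b) = meet (f a) (f b).

(* finite subsets of LC M are given by lists *)
Definition P3 {M N : MTAlg} (f : M -> N) : Prop :=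
  forall l : list M, (forall x, In x l -> is_LC x) ->
    f (Sup (fun x => In x l)) = Sup (img f (fun x => In x l)).

Definition P4 {M N : MTAlg} (f : M -> N) : Prop :=
  forall a : M, f a = Sup (img f (fun x => is_LC x /\ le x a)).

Definition proximity {M N : MTAlg} (f : M -> N) : Prop :=
  P1 f /\ P2 f /\ P3 f /\ P4 f.

Definition prox_comp {M1 M2 M3 : MTAlg} (g : M2 -> M3) (f : M1 -> M2) : M1 -> M3 :=
  fun a => Sup (img (fun x => g (f x)) (fun x => is_LC x /\ le x a)).

Definition prox_id (M : MTAlg) : M -> M :=
  fun a => Sup (fun x => is_LC x /\ le x a).

Record Frame : Type := {
  fr_car :> Type;
  fle : fr_car -> fr_car -> Prop;
  fle_refl : forall a, fle a a;
  fle_antisym : forall a b, fle a b -> fle b a -> a = b;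
  fle_trans : forall a b c, fle a b -> fle b c -> fle a c;
  ftop : fr_car;
  fmeet : fr_car -> fr_car -> fr_car;
  fSup : (fr_car -> Prop) -> fr_car;
  ftop_max : forall a, fle a ftop;
  fmeet_glb : forall x a b, fle x (fmeet a b) <-> fle x a /\ fle x b;
  fSup_lub : forall S x, fle (fSup S) x <-> (forall s, S s -> fle s x);
  frame_distr : forall a S, fmeet a (fSup S) = fSup (img (fmeet a) S)
}.
Arguments fle {_}. Arguments ftop {_}. Arguments fmeet {_}. Arguments fSup {_}.

Definition frame_morphism {L K : Frame} (h : L -> K) : Prop :=
  h ftop = ftop /\
  (forall a b, h (fmeet a b) = fmeet (h a) (h b)) /\
  (forall S, h (fSup S) = fSup (img h S)).

(* A category presented by objects, raw arrows, a predicate singling out the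
   genuine morphisms, composition, identities and equality of arrows. *)
Record CatData : Type := {
  Ob : Type;
  Hom : Ob -> Ob -> Type;
  isHom : forall A B, Hom A B -> Prop;
  cmp : forall A B C, Hom B C -> Hom A B -> Hom A C;
  idm : forall A, Hom A A;
  heq : forall A B, Hom A B -> Hom A B -> Prop
}.
Arguments isHom {_ _ _}. Arguments cmp {_ _ _ _}. Arguments idm {_}.
Arguments heq {_ _ _}.

Record Functor (C D : CatData) : Type := {
  fob : Ob C -> Ob D;
  fmor : forall A B, Hom C A B -> Hom D (fob A) (fob B);
  fmor_hom : forall A B (f : Hom C A B), isHom f -> isHom (fmor _ _ f);
  fmor_heq : forall A B (f g : Hom C A B), isHom f -> isHom g -> heq f g ->
               heq (fmor _ _ f) (fmor _ _ g);
  fmor_id : forall A, heq (fmor _ _ (idm A)) (idm (fob A));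
  fmor_cmp : forall A B E (f : Hom C A B) (g : Hom C B E), isHom f -> isHom g ->
               heq (fmor _ _ (cmp g f)) (cmp (fmor _ _ g) (fmor _ _ f))
}.
Arguments fob {C D}. Arguments fmor {C D} _ {A B}.

Definition is_iso {C : CatData} {A B : Ob C} (f : Hom C A B) : Prop :=
  isHom f /\ exists g : Hom C B A, isHom g /\
    heq (cmp g f) (idm A) /\ heq (cmp f g) (idm B).

Definition natiso_to_id {C D : CatData} (F : Functor C D) (G : Functor D C) : Prop :=
  exists eta : forall A : Ob C, Hom C (fob G (fob F A)) A,
    (forall A, is_iso (eta A)) /\
    (forall A B (f : Hom C A B), isHom f ->
       heq (cmp f (eta A)) (cmp (eta B) (fmor G (fmor F f)))).

Definition is_equivalence {C D : CatData} (F : Functor C D) : Prop :=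
  exists G : Functor D C, natiso_to_id F G /\ natiso_to_id G F.

Definition equivalent (C D : CatData) : Prop :=
  exists F : Functor C D, is_equivalence F.

Definition MTP : CatData := {|
  Ob := MTAlg;
  Hom := fun M N => M -> N;
  isHom := fun M N f => proximity f;
  cmp := fun M1 M2 M3 g f => prox_comp g f;
  idm := prox_id;
  heq := fun M N f g => forall a, f a = g a
|}.

Definition TDMTP : CatData := {|
  Ob := { M : MTAlg | is_TD M };
  Hom := fun M N => proj1_sig M -> proj1_sig N;
  isHom := fun M N f => proximity f;
  cmp := fun M1 M2 M3 g f => prox_comp g f;
  idm := fun M => prox_id (proj1_sig M);
  heq := fun M N f g => forall a, f a = g a
|}.

Definition Frm : CatData := {|
  Ob := Frame;
  Hom := fun L K => L -> K;
  isHom := fun L K h => frame_morphism h;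
  cmp := fun L1 L2 L3 g f => fun a => g (f a);
  idm := fun L => fun a => a;
  heq := fun L K f g => forall a, f a = g a
|}.

Definition incl_TD : Functor TDMTP MTP.
Proof.
  refine (@Build_Functor TDMTP MTP (fun M : { M : MTAlg | is_TD M } => proj1_sig M) (fun A B f => f) _ _ _ _).
  - intros A B f Hf; exact Hf.
  - intros A B f g _ _ H; exact H.
  - intros A a; reflexivity.
  - intros A B E f g _ _ a; reflexivity.
Defined.

(* Main.v *)
Require Import Defs.
From Stdlib Require Import List Classical ProofIrrelevance FunctionalExtensionality PropExtensionality.



Lemma leR {B : CBA} (a : B) : le a a. Proof. apply le_refl. Qed.
Lemma leT {B : CBA} (a b c : B) : le a b -> le b c -> le a c. Proof. apply le_trans. Qed.
Lemma leA {B : CBA} (a b : B) : le a b -> le b a -> a = b. Proof. apply le_antisym. Qed.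

Lemma meet_l {B : CBA} (a b : B) : le (meet a b) a.
Proof. destruct (proj1 (meet_glb _ (meet a b) a b) (leR _)); auto. Qed.
Lemma meet_r {B : CBA} (a b : B) : le (meet a b) b.
Proof. destruct (proj1 (meet_glb _ (meet a b) a b) (leR _)); auto. Qed.
Lemma meet_i {B : CBA} (x a b : B) : le x a -> le x b -> le x (meet a b).
Proof. intros; apply meet_glb; auto. Qed.
Lemma join_l {B : CBA} (a b : B) : le a (join a b).
Proof. destruct (proj1 (join_lub _ a b (join a b)) (leR _)); auto. Qed.
Lemma join_r {B : CBA} (a b : B) : le b (join a b).
Proof. destruct (proj1 (join_lub _ a b (join a b)) (leR _)); auto. Qed.
Lemma join_e {B : CBA} (a b x : B) : le a x -> le b x -> le (join a b) x.
Proof. intros; apply join_lub; auto. Qed.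
Lemma Sup_ub {B : CBA} (S : B -> Prop) s : S s -> le s (Sup S).
Proof. intros H. exact (proj1 (Sup_lub _ S (Sup S)) (leR _) s H). Qed.
Lemma Sup_e {B : CBA} (S : B -> Prop) x : (forall s, S s -> le s x) -> le (Sup S) x.
Proof. apply Sup_lub. Qed.

Lemma meet_mono {B : CBA} (a b c d : B) : le a c -> le b d -> le (meet a b) (meet c d).
Proof. intros; apply meet_i; [eapply leT; [apply meet_l|] | eapply leT; [apply meet_r|]]; auto. Qed.
Lemma join_mono {B : CBA} (a b c d : B) : le a c -> le b d -> le (join a b) (join c d).
Proof. intros; apply join_e; [eapply leT; [|apply join_l] | eapply leT; [|apply join_r]]; auto. Qed.
Lemma meetC {B : CBA} (a b : B) : meet a b = meet b a.
Proof. apply leA; apply meet_i; auto using meet_l, meet_r. Qed.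
Lemma joinC {B : CBA} (a b : B) : join a b = join b a.
Proof. apply leA; apply join_e; auto using join_l, join_r. Qed.
Lemma meet_top {B : CBA} (a : B) : meet a top = a.
Proof. apply leA; [apply meet_l| apply meet_i; auto using leR, top_max]. Qed.
Lemma join_bot {B : CBA} (a : B) : join a bot = a.
Proof. apply leA; [apply join_e; auto using leR, bot_min| apply join_l]. Qed.
Lemma meet_bot {B : CBA} (a : B) : meet a bot = bot.
Proof. apply leA; [apply meet_r| apply bot_min]. Qed.
Lemma le_bot {B : CBA} (a : B) : le a bot -> a = bot.
Proof. intros; apply leA; auto using bot_min. Qed.
Lemma le_top {B : CBA} (a : B) : le top a -> a = top.
Proof. intros; apply leA; auto using top_max. Qed.
Lemma distr_r {B : CBA} (a b c : B) : meet (join b c) a = join (meet b a) (meet c a).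
Proof. rewrite meetC, meet_join_distr, (meetC a b), (meetC a c); reflexivity. Qed.

Lemma shunt {B : CBA} (a b c : B) : le (meet a b) c <-> le a (join (neg b) c).
Proof.
  split; intro H.
  - rewrite <- (meet_top a), <- (compl_join _ b), meet_join_distr.
    apply join_e.
    + eapply leT; [exact H| apply join_r].
    + eapply leT; [apply meet_r| apply join_l].
  - eapply leT; [apply meet_mono; [exact H| apply leR]|].
    rewrite distr_r. apply join_e.
    + rewrite meetC, compl_meet; apply bot_min.
    + apply meet_l.
Qed.

Lemma compl_unique {B : CBA} (a b : B) : meet a b = bot -> join a b = top -> b = neg a.
Proof.
  intros H1 H2. apply leA.
  - rewrite <- (meet_top b), <- (compl_join _ a), meet_join_distr.
    apply join_e; [rewrite meetC, H1; apply bot_min| apply meet_r].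
  - rewrite <- (meet_top (neg a)), <- H2, meet_join_distr.
    apply join_e; [rewrite meetC, compl_meet; apply bot_min| apply meet_r].
Qed.

Lemma negneg {B : CBA} (a : B) : neg (neg a) = a.
Proof. symmetry; apply compl_unique; [rewrite meetC; apply compl_meet| rewrite joinC; apply compl_join]. Qed.
Lemma neg_top {B : CBA} : neg (@top B) = bot.
Proof. symmetry. apply compl_unique; [apply meet_bot| apply join_bot]. Qed.
Lemma neg_bot {B : CBA} : neg (@bot B) = top.
Proof. rewrite <- neg_top, negneg; reflexivity. Qed.

Lemma le_neg_bot {B : CBA} (a b : B) : le a (neg b) <-> le (meet a b) bot.
Proof. rewrite shunt, join_bot. tauto. Qed.

Lemma neg_anti {B : CBA} (a b : B) : le a b -> le (neg b) (neg a).
Proof. intros H. apply le_neg_bot. eapply leT; [apply meet_mono; [apply leR| exact H]|].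
  rewrite meetC, compl_meet; apply leR. Qed.

Lemma meetA {B : CBA} (a b c : B) : meet a (meet b c) = meet (meet a b) c.
Proof. apply leA; repeat apply meet_i; eauto using leT, meet_l, meet_r. Qed.
Lemma joinA {B : CBA} (a b c : B) : join a (join b c) = join (join a b) c.
Proof. apply leA; repeat apply join_e; eauto using leT, join_l, join_r. Qed.

Lemma LN {B : CBA} (a b : B) : le a b <-> le (meet a (neg b)) bot.
Proof. rewrite shunt, negneg, join_bot. tauto. Qed.

Lemma BL1 {B : CBA} (x y z w : B) :
  le (meet x (neg y)) (meet z (neg w)) <-> le x (join z y) /\ le (meet x w) y.
Proof.
  rewrite (LN (meet x w)), <- (meetA x w), (meetC w), (meetA x (neg y)), <- le_neg_bot.
  assert (E : le (meet x (neg y)) z <-> le x (join z y)).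
  { rewrite shunt, negneg, (joinC y). tauto. }
  split.
  - intros H; split.
    + apply E. eapply leT; [exact H| apply meet_l].
    + eapply leT; [exact H| apply meet_r].
  - intros [H1 H2]. apply meet_i; auto. apply E; auto.
Qed.

Lemma neg_join {B : CBA} (a b : B) : neg (join a b) = meet (neg a) (neg b).
Proof.
  apply leA.
  - apply meet_i; apply neg_anti; auto using join_l, join_r.
  - apply le_neg_bot. rewrite meet_join_distr. apply join_e.
    + rewrite meetC, meetA, compl_meet, meetC, meet_bot. apply leR.
    + rewrite <- meetA, (meetC (neg b) b), compl_meet, meet_bot. apply leR.
Qed.
Lemma neg_meet {B : CBA} (a b : B) : neg (meet a b) = join (neg a) (neg b).
Proof. rewrite <- (negneg a), <- (negneg b), <- neg_join, !negneg. reflexivity. Qed.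

Lemma BL2 {B : CBA} (u v u1 v1 R : B) :
  le (meet u (neg v)) (join (meet u1 (neg v1)) R) <->
  le (meet (meet u v1) (neg v)) R /\ le (meet u (neg (join v u1))) R.
Proof.
  rewrite <- (negneg (meet u1 (neg v1))) at 1.
  rewrite <- shunt, neg_meet, negneg, meet_join_distr, join_lub, neg_join.
  rewrite <- !meetA, (meetC (neg v) (neg u1)), (meetC (neg v) v1). tauto.
Qed.

Lemma Sup_mono {B : CBA} (S T : B -> Prop) : (forall x, S x -> T x) -> le (Sup S) (Sup T).
Proof. intros H; apply Sup_e; intros; apply Sup_ub; auto. Qed.
Lemma Sup_ext {B : CBA} (S T : B -> Prop) : (forall x, S x <-> T x) -> Sup S = Sup T.
Proof. intros H; apply leA; apply Sup_mono; firstorder. Qed.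
Lemma Sup_empty {B : CBA} (S : B -> Prop) : (forall x, ~ S x) -> Sup S = bot.
Proof. intros H; apply le_bot, Sup_e; intros s Hs; exfalso; eapply H; eauto. Qed.
Lemma Sup_pair {B : CBA} (a b : B) : Sup (fun t => t = a \/ t = b) = join a b.
Proof.
  apply leA.
  - apply Sup_e; intros s [->| ->]; auto using join_l, join_r.
  - apply join_e; apply Sup_ub; auto.
Qed.
Lemma Sup_img_le {B : Type} {C : CBA} (f : B -> C) (S : B -> Prop) x :
  (forall s, S s -> le (f s) x) -> le (Sup (img f S)) x.
Proof. intros H; apply Sup_e; intros y [s [Hs ->]]; auto. Qed.
Lemma Sup_img_ub {B : Type} {C : CBA} (f : B -> C) (S : B -> Prop) s : S s -> le (f s) (Sup (img f S)).
Proof. intros H; apply Sup_ub; exists s; auto. Qed.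

Lemma inf_distr {B : CBA} (x : B) (S : B -> Prop) : meet x (Sup S) = Sup (img (meet x) S).
Proof.
  apply leA.
  - rewrite meetC. apply shunt. apply Sup_e. intros s Hs.
    rewrite <- (meet_top s), <- (compl_join _ x), meet_join_distr.
    apply join_e.
    + eapply leT; [|apply join_r]. rewrite meetC. apply Sup_img_ub; auto.
    + eapply leT; [apply meet_r| apply join_l].
  - apply Sup_img_le. intros s Hs. apply meet_mono; auto using leR, Sup_ub.
Qed.



Ltac lem := first [ apply leR | eapply leT; [apply meet_l|]; lem | eapply leT; [apply meet_r|]; lem ].
Ltac mtac := repeat apply meet_i; lem.

Lemma meet_eq_l {B : CBA} (a b : B) : le a b -> meet a b = a.
Proof. intros; apply leA; [apply meet_l| apply meet_i; auto using leR]. Qed.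

Lemma box_mono {M : MTAlg} (a b : M) : le a b -> le (box a) (box b).
Proof. intros H. rewrite <- (meet_eq_l _ _ H), box_meet. apply meet_r. Qed.
Lemma box_box {M : MTAlg} (a : M) : box (box a) = box a.
Proof. apply leA; [apply box_defl| apply box_idem]. Qed.
Lemma open_box {M : MTAlg} (a : M) : is_open (box a).
Proof. apply box_box. Qed.
Lemma open_top {M : MTAlg} : is_open (@top M).
Proof. apply box_top. Qed.
Lemma open_bot {M : MTAlg} : is_open (@bot M).
Proof. apply le_bot, box_defl. Qed.
Lemma open_meet {M : MTAlg} (a b : M) : is_open a -> is_open b -> is_open (meet a b).
Proof. unfold is_open; intros; rewrite box_meet; congruence. Qed.
Lemma open_Sup {M : MTAlg} (S : M -> Prop) : (forall s, S s -> is_open s) -> is_open (Sup S).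
Proof.
  intros H. apply leA; [apply box_defl|]. apply Sup_e. intros s Hs.
  rewrite <- (H s Hs). apply box_mono, Sup_ub; auto.
Qed.
Lemma open_join {M : MTAlg} (a b : M) : is_open a -> is_open b -> is_open (join a b).
Proof. intros. rewrite <- Sup_pair. apply open_Sup. intros s [->| ->]; auto. Qed.

Lemma LC_form {M : MTAlg} (x : M) :
  is_LC x <-> exists u v, is_open u /\ is_open v /\ x = meet u (neg v).
Proof.
  split.
  - intros [b [c ->]]. exists (box b), (box (neg c)). split; [apply open_box|]. split; [apply open_box|]. reflexivity.
  - intros [u [v [Hu [Hv ->]]]]. exists u, (neg v). unfold dia. rewrite negneg. congruence.
Qed.
Lemma LC_open {M : MTAlg} (u : M) : is_open u -> is_LC u.
Proof. intros H. apply LC_form. exists u, bot. split; auto. split; [apply open_bot|].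
  rewrite neg_bot, meet_top; reflexivity. Qed.
Lemma LC_negopen {M : MTAlg} (v : M) : is_open v -> is_LC (neg v).
Proof. intros H. apply LC_form. exists top, v. split; [apply open_top|]. split; auto.
  rewrite meetC, meet_top; reflexivity. Qed.

Lemma prox_mono {M N : MTAlg} (f : M -> N) : P2 f -> forall a b, le a b -> le (f a) (f b).
Proof. intros H a b Hab. rewrite <- (meet_eq_l _ _ Hab), H. apply meet_r. Qed.

Lemma P1_bot {M N : MTAlg} (f : M -> N) : P1 f -> f bot = bot.
Proof.
  intros [_ [_ [_ HS]]]. rewrite <- (Sup_empty (fun _ : M => False)) by auto.
  rewrite HS by (intros s []). apply Sup_empty. intros x [s [[] _]].
Qed.

Lemma Sup_cons {B : CBA} (x : B) l : Sup (fun y => In y (x :: l)) = join x (Sup (fun y => In y l)).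
Proof.
  apply leA.
  - apply Sup_e. intros s [<-|H]; [apply join_l| eapply leT; [apply (Sup_ub (fun y => In y l)); exact H| apply join_r]].
  - apply join_e; [apply (Sup_ub (fun y => In y (x :: l))); left; auto| apply Sup_mono; intros; right; auto].
Qed.
Lemma Sup_img_cons {B C : CBA} (f : B -> C) (x : B) l :
  Sup (img f (fun y => In y (x :: l))) = join (f x) (Sup (img f (fun y => In y l))).
Proof.
  apply leA.
  - apply Sup_img_le. intros s [<-|H]; [apply join_l| eapply leT; [apply (Sup_img_ub f (fun y => In y l)); exact H| apply join_r]].
  - apply join_e; [apply (Sup_img_ub f (fun y => In y (x :: l))); left; auto| apply Sup_mono; intros y [s [Hs ->]]; exists s; split; [right|]; auto].
Qed.
Lemma Sup_nil {B : CBA} : Sup (fun y : B => In y nil) = bot.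
Proof. apply Sup_empty; intros x []. Qed.
Lemma Sup_img_nil {B C : CBA} (f : B -> C) : Sup (img f (fun y : B => In y nil)) = bot.
Proof. apply Sup_empty; intros x [s [[] _]]. Qed.

Lemma prox_neg {M N : MTAlg} (f : M -> N) : proximity f -> forall u, is_open u -> f (neg u) = neg (f u).
Proof.
  intros [H1 [H2 [H3 H4]]] u Hu.
  apply compl_unique.
  - rewrite <- H2, compl_meet. apply P1_bot; auto.
  - pose proof (H3 (u :: neg u :: nil)) as E.
    rewrite Sup_cons, Sup_cons, Sup_nil, join_bot, compl_join in E.
    rewrite Sup_img_cons, Sup_img_cons, Sup_img_nil, join_bot in E.
    rewrite <- E. apply H1.
    intros x [<-|[<-|[]]]; [apply LC_open| apply LC_negopen]; auto.
Qed.

Lemma prox_open {M N : MTAlg} (f : M -> N) : proximity f -> forall u, is_open u -> is_open (f u).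
Proof. intros [H1 _] u Hu. apply H1; auto. Qed.

Lemma prox_LC {M N : MTAlg} (f : M -> N) : proximity f -> forall u v, is_open u -> is_open v ->
  f (meet u (neg v)) = meet (f u) (neg (f v)).
Proof. intros Hf u v Hu Hv. rewrite (proj1 (proj2 Hf)), (prox_neg _ Hf); auto. Qed.

Lemma LCsup_ext {M : MTAlg} {C : CBA} (k1 k2 : M -> C) :
  (forall u v : M, is_open u -> is_open v -> k1 (meet u (neg v)) = k2 (meet u (neg v))) ->
  forall a, Sup (img k1 (fun x => is_LC x /\ le x a)) = Sup (img k2 (fun x => is_LC x /\ le x a)).
Proof.
  intros H a. apply Sup_ext. intros y; split; intros [x [[Hx Hxa] ->]]; exists x; split; auto;
  pose proof Hx as Hx'; apply LC_form in Hx'; destruct Hx' as [u [v [Hu [Hv ->]]]]; auto.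
  symmetry; auto.
Qed.

Lemma comp_LC {M1 M2 M3 : MTAlg} (g : M2 -> M3) (f : M1 -> M2) : proximity f -> proximity g ->
  forall u v, is_open u -> is_open v ->
  g (f (meet u (neg v))) = meet (g (f u)) (neg (g (f v))).
Proof. intros Hf Hg u v Hu Hv. rewrite (prox_LC _ Hf), (prox_LC _ Hg); auto using prox_open. Qed.

Lemma comp_eq {M1 M2 M3 M2' : MTAlg} (g : M2 -> M3) (f : M1 -> M2) (g' : M2' -> M3) (f' : M1 -> M2') :
  proximity f -> proximity g -> proximity f' -> proximity g' ->
  (forall u, is_open u -> g (f u) = g' (f' u)) ->
  forall a, prox_comp g f a = prox_comp g' f' a.
Proof.
  intros Hf Hg Hf' Hg' H a. unfold prox_comp.
  apply (LCsup_ext (fun x => g (f x)) (fun x => g' (f' x))).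
  intros u v Hu Hv. rewrite !comp_LC; auto. rewrite !H; auto.
Qed.

Lemma comp_id {M1 M2 : MTAlg} (g : M2 -> M1) (f : M1 -> M2) :
  proximity f -> proximity g -> (forall u, is_open u -> g (f u) = u) ->
  forall a, prox_comp g f a = prox_id M1 a.
Proof.
  intros Hf Hg H a. unfold prox_comp, prox_id.
  transitivity (Sup (img (fun x => x) (fun x : M1 => is_LC x /\ le x a))).
  - apply (LCsup_ext (fun x => g (f x)) (fun x => x)).
    intros u v Hu Hv. rewrite comp_LC; auto. rewrite !H; auto.
  - apply Sup_ext. intros y; split; [intros [x [Hx ->]]; auto| intros Hy; exists y; auto].
Qed.


Definition ext {M N : MTAlg} (phi : M -> N) (a : M) : N :=
  Sup (fun y => exists u v, is_open u /\ is_open v /\ le (meet u (neg v)) a /\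
                      y = meet (phi u) (neg (phi v))).

Lemma P1_mono {M N : MTAlg} (phi : M -> N) : P1 phi -> forall u v, is_open u -> is_open v ->
  le u v -> le (phi u) (phi v).
Proof.
  intros [_ [_ [Hm _]]] u v Hu Hv H. rewrite <- (meet_eq_l _ _ H), Hm; auto. apply meet_r.
Qed.
Lemma P1_join {M N : MTAlg} (phi : M -> N) : P1 phi -> forall u v, is_open u -> is_open v ->
  phi (join u v) = join (phi u) (phi v).
Proof.
  intros H u v Hu Hv. rewrite <- !Sup_pair. rewrite (proj2 (proj2 (proj2 H))).
  - apply Sup_ext. intros y; split.
    + intros [s [[->| ->] ->]]; [left|right]; reflexivity.
    + intros [->| ->]; [exists u; split; [left|]| exists v; split; [right|]]; reflexivity.
  - intros s [->| ->]; auto.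
Qed.

Lemma piece_mono {M N : MTAlg} (phi : M -> N) : P1 phi -> forall u v u' v',
  is_open u -> is_open v -> is_open u' -> is_open v' ->
  le (meet u' (neg v')) (meet u (neg v)) ->
  le (meet (phi u') (neg (phi v'))) (meet (phi u) (neg (phi v))).
Proof.
  intros H u v u' v' Hu Hv Hu' Hv' Hle. apply BL1 in Hle. apply BL1. destruct Hle as [H1 H2]. split.
  - rewrite <- P1_join; auto. apply P1_mono; auto using open_join.
  - rewrite <- (proj1 (proj2 (proj2 H))); auto. apply P1_mono; auto using open_meet.
Qed.

Lemma ext_LC {M N : MTAlg} (phi : M -> N) : P1 phi -> forall u v, is_open u -> is_open v ->
  ext phi (meet u (neg v)) = meet (phi u) (neg (phi v)).
Proof.
  intros H u v Hu Hv. apply leA.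
  - apply Sup_e. intros y [u' [v' [Hu' [Hv' [Hle ->]]]]]. apply piece_mono; auto.
  - apply Sup_ub. exists u, v. repeat split; auto using leR.
Qed.

Lemma ext_open {M N : MTAlg} (phi : M -> N) : P1 phi -> forall u, is_open u -> ext phi u = phi u.
Proof.
  intros H u Hu. pose proof (ext_LC phi H u bot Hu open_bot) as E.
  rewrite neg_bot, meet_top, (P1_bot phi H), neg_bot, meet_top in E. exact E.
Qed.

Lemma ext_mono {M N : MTAlg} (phi : M -> N) a b : le a b -> le (ext phi a) (ext phi b).
Proof.
  intros H. apply Sup_mono. intros y [u [v [Hu [Hv [Hle ->]]]]]. exists u, v. repeat split; auto.
  eapply leT; eauto.
Qed.

Lemma ext_proximity {M N : MTAlg} (phi : M -> N) : P1 phi -> proximity (ext phi).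
Proof.
  intros H. pose proof H as [Ho [Ht [Hm HS]]].
  assert (Hmono := ext_mono phi).
  split; [|split; [|split]].
  -
    split; [|split; [|split]].
    + intros a Ha. rewrite ext_open; auto.
    + rewrite ext_open; auto using open_top.
    + intros a b Ha Hb. rewrite !ext_open; auto using open_meet.
    + intros S HSo. rewrite (ext_open phi H) by (apply open_Sup; auto). rewrite HS by auto.
      apply Sup_ext. intros y; split; intros [s [Hs ->]]; exists s; split; auto;
      rewrite ext_open; auto.
  -
    intros a b. apply leA.
    + apply meet_i; apply Hmono; [apply meet_l| apply meet_r].
    + unfold ext at 1 2. rewrite inf_distr. apply Sup_img_le. intros q [u2 [v2 [Hu2 [Hv2 [Hle2 ->]]]]].
      rewrite meetC, inf_distr. apply Sup_img_le. intros p [u1 [v1 [Hu1 [Hv1 [Hle1 ->]]]]].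
      apply Sup_ub. exists (meet u1 u2), (join v1 v2).
      split; [apply open_meet; auto|]. split; [apply open_join; auto|]. split.
      * rewrite neg_join. apply meet_i.
        -- eapply leT; [|exact Hle1]. mtac.
        -- eapply leT; [|exact Hle2]. mtac.
      * rewrite Hm, P1_join, neg_join; auto. apply leA; mtac.
  -
    intros l. induction l as [|x l IH]; intros Hl.
    + rewrite Sup_nil, Sup_img_nil. apply le_bot. apply Sup_e.
      intros y [u [v [Hu [Hv [Hle ->]]]]]. apply (proj2 (LN u v)) in Hle. apply (proj1 (LN (phi u) (phi v))).
      apply P1_mono; auto.
    + rewrite Sup_cons, Sup_img_cons. apply leA.
      2:{ apply join_e; [apply Hmono, join_l|]. apply Sup_img_le; intros s Hs; apply Hmono. eapply leT; [apply (Sup_ub (fun y => In y l)); exact Hs| apply join_r]. }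
      assert (Hx : is_LC x) by (apply Hl; left; auto).
      apply LC_form in Hx. destruct Hx as [u1 [v1 [Hu1 [Hv1 ->]]]].
      rewrite ext_LC; auto.
      rewrite <- IH by (intros; apply Hl; right; auto).
      apply Sup_e. intros y [u [v [Hu [Hv [Hle ->]]]]].
      apply BL2 in Hle. apply BL2. destruct Hle as [L1 L2].
      split.
      * rewrite <- Hm; auto. rewrite <- ext_LC; auto using open_meet.
      * rewrite <- P1_join; auto. rewrite <- ext_LC; auto using open_join.
  -
    intros a. apply leA.
    + apply Sup_e. intros y [u [v [Hu [Hv [Hle ->]]]]].
      rewrite <- ext_LC; auto. apply Sup_img_ub. split; auto.
      apply LC_form. exists u, v; auto.
    + apply Sup_img_le. intros s [_ Hs]. apply Hmono; auto.
Qed.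


Lemma fleR {L : Frame} (a : L) : fle a a. Proof. apply fle_refl. Qed.
Lemma fleT {L : Frame} (a b c : L) : fle a b -> fle b c -> fle a c. Proof. apply fle_trans. Qed.
Lemma fmeet_l {L : Frame} (a b : L) : fle (fmeet a b) a.
Proof. destruct (proj1 (fmeet_glb _ (fmeet a b) a b) (fleR _)); auto. Qed.
Lemma fmeet_r {L : Frame} (a b : L) : fle (fmeet a b) b.
Proof. destruct (proj1 (fmeet_glb _ (fmeet a b) a b) (fleR _)); auto. Qed.
Lemma fmeet_i {L : Frame} (x a b : L) : fle x a -> fle x b -> fle x (fmeet a b).
Proof. intros; apply fmeet_glb; auto. Qed.
Lemma fSup_ub {L : Frame} (S : L -> Prop) s : S s -> fle s (fSup S).
Proof. intros H. exact (proj1 (fSup_lub _ S (fSup S)) (fleR _) s H). Qed.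
Lemma fSup_e {L : Frame} (S : L -> Prop) x : (forall s, S s -> fle s x) -> fle (fSup S) x.
Proof. apply fSup_lub. Qed.

Definition fjoin {L : Frame} (a b : L) : L := fSup (fun x => x = a \/ x = b).
Definition fbot {L : Frame} : L := fSup (fun _ => False).
Lemma fjoin_l {L : Frame} (a b : L) : fle a (fjoin a b). Proof. apply fSup_ub; auto. Qed.
Lemma fjoin_r {L : Frame} (a b : L) : fle b (fjoin a b). Proof. apply fSup_ub; auto. Qed.
Lemma fjoin_e {L : Frame} (a b x : L) : fle a x -> fle b x -> fle (fjoin a b) x.
Proof. intros; apply fSup_e; intros s [->| ->]; auto. Qed.
Lemma fbot_min {L : Frame} (a : L) : fle fbot a. Proof. apply fSup_e; intros s []. Qed.

Lemma FL {L : Frame} (c d : L) (T : L -> Prop) :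
  fle c (fSup T) -> (forall t, T t -> fle (fmeet c t) d) -> fle c d.
Proof.
  intros H1 H2.
  assert (E : c = fmeet c (fSup T)) by (apply fle_antisym; [apply fmeet_i; auto using fleR| apply fmeet_l]).
  rewrite E, frame_distr. apply fSup_e. intros y [t [Ht ->]]. auto.
Qed.
Lemma FL2 {L : Frame} (c a b d : L) :
  fle c (fjoin a b) -> fle (fmeet c a) d -> fle (fmeet c b) d -> fle c d.
Proof. intros H1 H2 H3. apply (FL c d _ H1). intros t [->| ->]; auto. Qed.

Ltac flem := first [ apply fleR | eapply fleT; [apply fmeet_l|]; flem | eapply fleT; [apply fmeet_r|]; flem ].
Ltac fmt := repeat apply fmeet_i; flem.

Lemma fmeet_mono {L : Frame} (a b c d : L) : fle a c -> fle b d -> fle (fmeet a b) (fmeet c d).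
Proof. intros; apply fmeet_i; [eapply fleT; [apply fmeet_l|] | eapply fleT; [apply fmeet_r|]]; auto. Qed.

Lemma FL3 {L : Frame} (c d x u y : L) :
  fle c (fjoin x d) -> fle x (fjoin u y) -> fle (fmeet c u) d -> fle (fmeet c y) d -> fle c d.
Proof.
  intros H1 H2 H3 H4. apply (FL2 c x d d H1); [|apply fmeet_r].
  apply (FL2 _ u y d).
  - eapply fleT; [apply fmeet_r| exact H2].
  - eapply fleT; [|exact H3]. fmt.
  - eapply fleT; [|exact H4]. fmt.
Qed.

(* ===== the polarity construction of a complete Boolean algebra ===== *)
Record Pre : Type := {
  pt : Type;
  pr : pt -> pt -> Prop;
  Zp : pt -> Prop;
  pr_refl : forall p, pr p p;
  pr_trans : forall p q r, pr p q -> pr q r -> pr p r;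
  Z_down : forall p q, pr q p -> Zp p -> Zp q
}.
Arguments pr {_}. Arguments Zp {_}.

Definition II {P : Pre} (p q : pt P) : Prop := forall r, pr r p -> pr r q -> Zp r.
Definition NN {P : Pre} (X : pt P -> Prop) (p : pt P) : Prop := forall q, X q -> II p q.
Definition reg {P : Pre} (X : pt P -> Prop) : Prop := forall p, NN (NN X) p -> X p.

Lemma II_sym {P : Pre} (p q : pt P) : II p q -> II q p.
Proof. unfold II; intros H r H1 H2; auto. Qed.
Lemma sub_NN {P : Pre} (X : pt P -> Prop) p : X p -> NN (NN X) p.
Proof. intros Hp q Hq. apply II_sym. apply Hq; auto. Qed.
Lemma NN_anti {P : Pre} (X Y : pt P -> Prop) : (forall p, X p -> Y p) -> forall p, NN Y p -> NN X p.
Proof. intros H p Hp q Hq. apply Hp; auto. Qed.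
Lemma NN_mono2 {P : Pre} (X Y : pt P -> Prop) : (forall p, X p -> Y p) -> forall p, NN (NN X) p -> NN (NN Y) p.
Proof. intros H. apply NN_anti, NN_anti, H. Qed.
Lemma reg_N {P : Pre} (X : pt P -> Prop) : reg (NN X).
Proof. intros p Hp. apply (NN_anti X (NN (NN X))); auto. apply sub_NN. Qed.
Lemma NN_down {P : Pre} (X : pt P -> Prop) p q : pr q p -> NN X p -> NN X q.
Proof. intros Hqp Hp s Hs r H1 H2. apply (Hp s Hs); [exact (pr_trans _ _ _ _ H1 Hqp)| exact H2]. Qed.
Lemma reg_down {P : Pre} (X : pt P -> Prop) : reg X -> forall p q, pr q p -> X p -> X q.
Proof. intros HX p q H Hp. apply HX. eapply NN_down; eauto. apply sub_NN; auto. Qed.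
Lemma Z_II {P : Pre} (p q : pt P) : Zp p -> II p q.
Proof. intros H r H1 H2. exact (Z_down _ _ _ H1 H). Qed.
Lemma Z_reg {P : Pre} (X : pt P -> Prop) : reg X -> forall p, Zp p -> X p.
Proof. intros HX p Hp. apply HX. intros q _. apply Z_II; auto. Qed.
Lemma II_self {P : Pre} (p : pt P) : II p p -> Zp p.
Proof. intros H. apply H; apply pr_refl. Qed.

Definition RS (P : Pre) : Type := { X : pt P -> Prop | reg X }.
Lemma RS_ext {P : Pre} (X Y : RS P) : (forall p, proj1_sig X p <-> proj1_sig Y p) -> X = Y.
Proof.
  destruct X as [x hx], Y as [y hy]; simpl; intros H.
  assert (x = y) by (apply functional_extensionality; intros; apply propositional_extensionality; auto).
  subst. f_equal. apply proof_irrelevance.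
Qed.

Definition RSle {P : Pre} (X Y : RS P) : Prop := forall p, proj1_sig X p -> proj1_sig Y p.
Definition mkRS {P : Pre} (X : pt P -> Prop) : RS P := exist _ (NN (NN X)) (reg_N (NN X)).
Definition RStop {P : Pre} : RS P := exist (fun X : pt P -> Prop => reg X) (fun _ => True) (fun _ _ => I).
Lemma reg_Z {P : Pre} : reg (@Zp P).
Proof. intros p Hp. apply II_self. apply Hp. intros q Hq. apply II_sym, Z_II; auto. Qed.
Definition RSbot {P : Pre} : RS P := exist _ Zp reg_Z.
Lemma reg_meet {P : Pre} (X Y : RS P) : reg (fun p => proj1_sig X p /\ proj1_sig Y p).
Proof.
  destruct X as [x hx], Y as [y hy]; simpl. intros p Hp. split.
  - apply hx. revert p Hp. apply NN_mono2. tauto.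
  - apply hy. revert p Hp. apply NN_mono2. tauto.
Qed.
Definition RSmeet {P : Pre} (X Y : RS P) : RS P := exist _ _ (reg_meet X Y).
Definition RSjoin {P : Pre} (X Y : RS P) : RS P := mkRS (fun p => proj1_sig X p \/ proj1_sig Y p).
Definition RSneg {P : Pre} (X : RS P) : RS P := exist _ (NN (proj1_sig X)) (reg_N _).
Definition RSSup {P : Pre} (S : RS P -> Prop) : RS P := mkRS (fun p => exists X, S X /\ proj1_sig X p).

Lemma RS_lub {P : Pre} (U : pt P -> Prop) (Y : RS P) :
  RSle (mkRS U) Y <-> (forall p, U p -> proj1_sig Y p).
Proof.
  destruct Y as [y hy]; unfold RSle; simpl. split.
  - intros H p Hp. apply H. apply sub_NN; auto.
  - intros H p Hp. apply hy. revert p Hp. apply NN_mono2. auto.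
Qed.

Lemma RS_distr {P : Pre} (a b c : RS P) : RSmeet a (RSjoin b c) = RSjoin (RSmeet a b) (RSmeet a c).
Proof.
  apply RS_ext. destruct a as [x hx], b as [y hy], c as [w hw]; simpl. intros p. split.
  - intros [Hx Hp] q Hq r H1 H2. apply NNPP. intros Hr.
    assert (Hrx : x r) by exact (reg_down x hx p r H1 Hx).
    assert (Hrn : NN (NN (fun p => y p \/ w p)) r) by exact (NN_down _ p r H1 Hp).
    assert (Hnot : ~ NN (fun p => y p \/ w p) r).
    { intros Hn. apply Hr. apply II_self. apply Hrn; auto. }
    apply Hnot. intros s Hs t Ht1 Ht2. apply NNPP. intros Ht.
    assert (Htx : x t) by exact (reg_down x hx r t Ht1 Hrx).
    assert (Hq' : (x t /\ y t) \/ (x t /\ w t)).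
    { destruct Hs as [Hs|Hs]; [left|right]; split; auto; [exact (reg_down y hy s t Ht2 Hs)| exact (reg_down w hw s t Ht2 Hs)]. }
    apply Ht. apply (Hq t Hq'); [exact (pr_trans _ _ _ _ Ht1 H2)| apply pr_refl].
  - intros Hp. split.
    + apply hx. revert p Hp. apply NN_mono2. tauto.
    + revert p Hp. apply NN_mono2. tauto.
Qed.

Definition RSCBA (P : Pre) : CBA.
Proof.
  refine (@Build_CBA (RS P) RSle _ _ _ RStop RSbot RSmeet RSjoin RSneg RSSup _ _ _ _ _ RS_distr _ _).
  - intros a p; auto.
  - intros a b H1 H2. apply RS_ext. split; auto.
  - intros a b c H1 H2 p Hp; auto.
  - intros a p _. exact I.
  - intros a p Hp. destruct a as [x hx]. apply Z_reg; auto.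
  - intros x a b. unfold RSle; simpl. split.
    + intros H; split; intros p Hp; apply H; auto.
    + intros [H1 H2] p Hp; split; auto.
  - intros a b x. unfold RSjoin. rewrite RS_lub. split.
    + intros H; split; intros p Hp; apply H; auto.
    + intros [H1 H2] p [Hp|Hp]; auto.
  - intros S x. unfold RSSup. rewrite RS_lub. split.
    + intros H s Hs p Hp. apply H. eauto.
    + intros H p [X [HX Hp]]. apply (H X HX); auto.
  - intros a. apply RS_ext. destruct a as [x hx]; simpl. intros p; split.
    + intros [H1 H2]. apply II_self. apply H2; auto.
    + intros Hp. split; [apply Z_reg; auto| apply Z_reg; [apply reg_N| auto]].
  - intros a. apply RS_ext. destruct a as [x hx]; simpl. intros p; split; [intros; exact I|].
    intros _ q Hq. apply II_sym, Z_II. apply II_self.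
    assert (H1 : NN x q) by exact (NN_anti x _ (fun p h => or_introl h) q Hq).
    assert (H2 : NN (NN x) q) by exact (NN_anti (NN x) _ (fun p h => or_intror h) q Hq).
    apply H2; auto.
Defined.


Record Emb (L : Frame) : Type := {
  eB : CBA;
  emb : L -> eB;
  emb_top : emb ftop = top;
  emb_meet : forall u v, emb (fmeet u v) = meet (emb u) (emb v);
  emb_Sup : forall S, emb (fSup S) = Sup (img emb S);
  emb_refl : forall u v, le (emb u) (emb v) -> fle u v
}.
Arguments eB {L}. Arguments emb {L}.

Definition er {L : Frame} (E : Emb L) (a : eB E) : L := fSup (fun u => le (emb E u) a).

Lemma emb_mono {L : Frame} (E : Emb L) u v : fle u v -> le (emb E u) (emb E v).
Proof.
  intros H. assert (Hu : u = fmeet u v) by (apply fle_antisym; [apply fmeet_i; auto using fleR| apply fmeet_l]).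
  rewrite Hu, emb_meet. apply meet_r.
Qed.
Lemma emb_er_le {L : Frame} (E : Emb L) a : le (emb E (er E a)) a.
Proof. unfold er. rewrite emb_Sup. apply Sup_img_le. auto. Qed.
Lemma er_emb {L : Frame} (E : Emb L) u : er E (emb E u) = u.
Proof.
  apply fle_antisym.
  - apply fSup_e. intros s Hs. apply (emb_refl _ E); auto.
  - apply fSup_ub. apply leR.
Qed.
Lemma er_mono {L : Frame} (E : Emb L) a b : le a b -> fle (er E a) (er E b).
Proof. intros H. apply fSup_e. intros s Hs. apply fSup_ub. eapply leT; eauto. Qed.
Lemma er_ge {L : Frame} (E : Emb L) u a : le (emb E u) a -> fle u (er E a).
Proof. intros H. apply fSup_ub; auto. Qed.

Definition MTof {L : Frame} (E : Emb L) : MTAlg.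
Proof.
  refine (@Build_MTAlg (eB E) (fun a => emb E (er E a)) _ _ _ _).
  - apply le_top. eapply leT; [|apply (emb_mono E ftop), er_ge, top_max]. rewrite (emb_top _ E). apply leR.
  - intros a b. apply leA.
    + apply meet_i; apply emb_mono, er_mono; [apply meet_l| apply meet_r].
    + rewrite <- emb_meet. apply emb_mono, er_ge. rewrite emb_meet.
      apply meet_mono; apply emb_er_le.
  - intros a. apply emb_er_le.
  - intros a. apply emb_mono, er_ge. apply leR.
Defined.

Lemma MTof_open {L : Frame} (E : Emb L) (u : L) : @is_open (MTof E) (emb E u).
Proof. unfold is_open; simpl. rewrite er_emb. reflexivity. Qed.
Lemma MTof_open_inv {L : Frame} (E : Emb L) (a : MTof E) : is_open a -> emb E (er E a) = a.
Proof. unfold is_open; simpl. auto. Qed.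

Definition OT (M : MTAlg) : Type := { a : M | is_open a }.
Definition Otop (M : MTAlg) : OT M := exist _ top open_top.
Definition Omeet {M : MTAlg} (a b : OT M) : OT M :=
  exist _ (meet (proj1_sig a) (proj1_sig b)) (open_meet _ _ (proj2_sig a) (proj2_sig b)).
Definition Oimg {M : MTAlg} (S : OT M -> Prop) : M -> Prop :=
  fun x => exists s, S s /\ x = proj1_sig s.
Lemma Oimg_open {M : MTAlg} (S : OT M -> Prop) : is_open (Sup (Oimg S)).
Proof. apply open_Sup. intros x [s [_ ->]]. apply (proj2_sig s). Qed.
Definition OSup {M : MTAlg} (S : OT M -> Prop) : OT M := exist _ (Sup (Oimg S)) (Oimg_open S).
Lemma OT_ext {M : MTAlg} (a b : OT M) : proj1_sig a = proj1_sig b -> a = b.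
Proof. destruct a, b; simpl; intros ->. f_equal. apply proof_irrelevance. Qed.

Definition OF (M : MTAlg) : Frame.
Proof.
  refine (@Build_Frame (OT M) (fun a b => le (proj1_sig a) (proj1_sig b)) _ _ _ (Otop M) Omeet OSup _ _ _ _).
  - intros; apply leR.
  - intros a b H1 H2. apply OT_ext, leA; auto.
  - intros a b c; apply leT.
  - intros a; apply top_max.
  - intros x a b. simpl. apply meet_glb.
  - intros S x. simpl. rewrite Sup_lub. split.
    + intros H s Hs. apply H. exists s; auto.
    + intros H y [s [Hs ->]]. auto.
  - intros a S. apply OT_ext. simpl. rewrite inf_distr. apply Sup_ext. intros y. split.
    + intros [x [[s [Hs ->]] ->]]. exists (Omeet a s). split; [exists s; auto| reflexivity].
    + intros [t [[s [Hs ->]] ->]]. exists (proj1_sig s). split; [exists s; auto| reflexivity].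
Defined.



Definition prL {L : Frame} (p q : L * L) : Prop :=
  fle (fst p) (fjoin (fst q) (snd p)) /\ fle (fmeet (fst p) (snd q)) (snd p).
Definition ZL {L : Frame} (p : L * L) : Prop := fle (fst p) (snd p).

Lemma prL_refl {L : Frame} (p : L * L) : prL p p.
Proof. split; [apply fjoin_l| apply fmeet_r]. Qed.

Lemma prL_trans {L : Frame} (p q r : L * L) : prL p q -> prL q r -> prL p r.
Proof.
  destruct p as [a b], q as [u v], r as [x y]; unfold prL; simpl.
  intros [H1 H2] [H3 H4]. split.
  - apply (FL2 a u b _ H1).
    + apply (FL2 _ x v).
      * eapply fleT; [apply fmeet_r| exact H3].
      * eapply fleT; [apply fmeet_r| apply fjoin_l].
      * eapply fleT; [|apply fjoin_r]. eapply fleT; [|exact H2]. fmt.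
    + eapply fleT; [apply fmeet_r| apply fjoin_r].
  - apply (FL2 _ u b).
    + eapply fleT; [apply fmeet_l| exact H1].
    + eapply fleT; [|exact H2]. apply fmeet_i; [fmt|].
      eapply fleT; [|exact H4]. fmt.
    + apply fmeet_r.
Qed.

Lemma ZL_down {L : Frame} (p q : L * L) : prL q p -> ZL p -> ZL q.
Proof.
  destruct p as [u v], q as [a b]; unfold prL, ZL; simpl. intros [H1 H2] H3.
  apply (FL2 a u b _ H1); [|apply fmeet_r].
  eapply fleT; [|exact H2]. apply fmeet_mono; [apply fleR| exact H3].
Qed.

Definition PreL (L : Frame) : Pre :=
  {| pt := L * L; pr := prL; Zp := ZL; pr_refl := prL_refl; pr_trans := prL_trans; Z_down := ZL_down |}.

Definition eP {L : Frame} (u : L) : pt (PreL L) -> Prop := fun p => prL p (u, fbot).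

Lemma eP_reg {L : Frame} (u : L) : reg (eP u).
Proof.
  intros [a b] Hp. unfold eP, prL; simpl. split.
  2:{ eapply fleT; [apply fmeet_r| apply fbot_min]. }
  set (q := (a, fjoin u b) : pt (PreL L)).
  assert (Hq : NN (eP u) q).
  { intros [x y] [Hs1 Hs2] [c d] [Hr1 Hr2] [Hr3 Hr4]. simpl in *. unfold ZL; simpl.
    apply (FL3 c d x u y); auto.
    eapply fleT; [|exact Hr2]. apply fmeet_mono; [apply fleR| apply fjoin_l]. }
  apply (Hp q Hq q); [|apply prL_refl].
  split; simpl; [apply fjoin_l| eapply fleT; [apply fmeet_r| apply fjoin_r]].
Qed.

Definition eL {L : Frame} (u : L) : RSCBA (PreL L) := exist _ (eP u) (eP_reg u).

Lemma eL_top {L : Frame} : eL (@ftop L) = top.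
Proof.
  apply RS_ext. intros [a b]; simpl; split; [intros; exact I|].
  intros _. unfold eP, prL; simpl. split; [apply fleT with ftop; [apply ftop_max| apply fjoin_l]|].
  eapply fleT; [apply fmeet_r| apply fbot_min].
Qed.

Lemma eL_meet {L : Frame} (u v : L) : eL (fmeet u v) = meet (eL u) (eL v).
Proof.
  apply RS_ext. intros [a b]; simpl. unfold eP, prL; simpl.
  assert (Hb : fle (fmeet a fbot) b) by (eapply fleT; [apply fmeet_r| apply fbot_min]).
  split.
  - intros [H _]. split; split; auto; (eapply fleT; [exact H| apply fjoin_e; [|apply fjoin_r]]);
      (eapply fleT; [|apply fjoin_l]); fmt.
  - intros [[H1 _] [H2 _]]. split; auto.
    apply (FL2 a u b _ H1); [|eapply fleT; [apply fmeet_r| apply fjoin_r]].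
    apply (FL2 _ v b).
    + eapply fleT; [apply fmeet_l| exact H2].
    + eapply fleT; [|apply fjoin_l]. apply fmeet_i; fmt.
    + eapply fleT; [apply fmeet_r| apply fjoin_r].
Qed.

Lemma eL_mono {L : Frame} (u v : L) : fle u v -> forall p, eP u p -> eP v p.
Proof.
  intros H [a b] [H1 H2]; split; auto. eapply fleT; [exact H1|].
  apply fjoin_e; [eapply fleT; [exact H|]; apply fjoin_l| apply fjoin_r].
Qed.

Lemma eL_Sup {L : Frame} (S : L -> Prop) : eL (fSup S) = Sup (img eL S).
Proof.
  apply RS_ext. intros p; simpl. split.
  - destruct p as [a b]. intros [Hp1 Hp2] q Hq [c d] [Hr1 Hr2] Hr3. simpl in *. unfold ZL; simpl.
    apply (FL2 c a d _ Hr1); [|apply fmeet_r].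
    apply (FL2 _ (fSup S) b).
    + eapply fleT; [apply fmeet_r| exact Hp1].
    + apply (FL _ _ S (fmeet_r _ _)). intros t Ht.
      assert (Hct : fle (fmeet c t) d).
      { set (tt := (fmeet c t, d) : pt (PreL L)).
        assert (Htr : prL tt (c, d)) by (split; simpl; [eapply fleT; [apply fmeet_l| apply fjoin_l]| apply fmeet_r]).
        refine (Hq tt _ tt _ _).
        - exists (eL t). split; [exists t; auto|]. simpl. unfold eP, prL; simpl. split.
          + eapply fleT; [apply fmeet_r| apply fjoin_l].
          + eapply fleT; [apply fmeet_r| apply fbot_min].
        - exact (prL_trans _ _ _ Htr Hr3).
        - apply prL_refl. }
      eapply fleT; [|exact Hct]. fmt.
    + eapply fleT; [|exact Hr2]. fmt.
  - intros Hp. apply (eP_reg (fSup S)). revert p Hp. apply NN_mono2.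
    intros q [X [[s [Hs ->]] Hq]]. simpl in Hq. revert Hq. apply eL_mono. apply fSup_ub; auto.
Qed.

Lemma eL_refl {L : Frame} (u v : L) : le (eL u) (eL v) -> fle u v.
Proof.
  intros H. assert (Hu : eP u (u, fbot)).
  { split; simpl; [apply fjoin_l| apply fmeet_r]. }
  destruct (H _ Hu) as [H1 _]; simpl in H1.
  apply (FL2 u v fbot _ H1); [apply fmeet_r| eapply fleT; [apply fmeet_r| apply fbot_min]].
Qed.

Definition EmbL (L : Frame) : Emb L :=
  {| eB := RSCBA (PreL L); emb := eL; emb_top := eL_top; emb_meet := eL_meet;
     emb_Sup := eL_Sup; emb_refl := eL_refl |}.

Definition ML (L : Frame) : MTAlg := MTof (EmbL L).

Lemma ML_TD (L : Frame) : is_TD (ML L).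
Proof.
  intros D. exists (fun x => is_LC x /\ le x D). split; [tauto|].
  apply leA; [|apply Sup_e; tauto].
  intros [a b] Hp. apply sub_NN.
  exists (meet (eL a) (neg (eL b)) : ML L). split; [split|].
  - apply LC_form. exists (eL a : ML L), (eL b : ML L). split; [apply (MTof_open (EmbL L))|].
    split; [apply (MTof_open (EmbL L))| reflexivity].
  - intros [x y] [Hx Hn]. simpl in Hx, Hn. destruct D as [Dp HD]; simpl in *.
    apply HD. intros q Hq r Hr1 Hr2.
    assert (HrA : eP a r) by exact (reg_down _ (eP_reg a) _ _ Hr1 Hx).
    assert (HrN : NN (eP b) r) by exact (NN_down _ _ _ Hr1 Hn).
    destruct r as [c d].
    assert (Hcb : fle (fmeet c b) d).
    { refine (HrN (b, fbot) _ (fmeet c b, d) _ _).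
      - split; simpl; [apply fjoin_l| apply fmeet_r].
      - split; simpl; [eapply fleT; [apply fmeet_l| apply fjoin_l]| apply fmeet_r].
      - split; simpl; [eapply fleT; [apply fmeet_r| apply fjoin_l]| eapply fleT; [apply fmeet_r| apply fbot_min]]. }
    assert (HrD : Dp (c, d)).
    { apply (reg_down _ HD (a, b)); auto. destruct HrA as [H1 _]. split; auto. }
    apply (Hq _ HrD); [exact Hr2| apply prL_refl].
  - simpl. split.
    + split; simpl; [apply fjoin_l| eapply fleT; [apply fmeet_r| apply fbot_min]].
    + intros [x y] [Hs1 Hs2] [c d] [Hr1 Hr2] [Hr3 Hr4]. simpl in *. unfold ZL; simpl.
      apply (FL3 c d x b y); auto.
Qed.


Lemma prox_id_img (M : MTAlg) a : prox_id M a = Sup (img (fun x => x) (fun x : M => is_LC x /\ le x a)).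
Proof. apply Sup_ext. intros y; split; [intros Hy; exists y; auto| intros [x [Hx ->]]; auto]. Qed.

Lemma prox_id_open (M : MTAlg) (u : M) : is_open u -> prox_id M u = u.
Proof.
  intros Hu. apply leA; [apply Sup_e; tauto| apply Sup_ub; split; [apply LC_open; auto| apply leR]].
Qed.

Lemma comp_open {M1 M2 M3 : MTAlg} (g : M2 -> M3) (f : M1 -> M2) u :
  proximity f -> proximity g -> is_open u -> prox_comp g f u = g (f u).
Proof.
  intros Hf Hg Hu. unfold prox_comp. apply leA.
  - apply Sup_img_le. intros x [_ Hx]. cbv beta. apply (prox_mono g (proj1 (proj2 Hg))), (prox_mono f (proj1 (proj2 Hf))); auto.
  - apply (Sup_img_ub (fun x => g (f x))). split; [apply LC_open; auto| apply leR].
Qed.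

Lemma P4_ext {M N : MTAlg} (phi : M -> N) (H : P1 phi) a :
  ext phi a = Sup (img (ext phi) (fun x => is_LC x /\ le x a)).
Proof. exact (proj2 (proj2 (proj2 (ext_proximity phi H))) a). Qed.

Lemma ext_eq_id {M : MTAlg} (phi : M -> M) : P1 phi -> (forall u, is_open u -> phi u = u) ->
  forall a, ext phi a = prox_id M a.
Proof.
  intros H Hid a. rewrite P4_ext, prox_id_img by auto. apply LCsup_ext.
  intros u v Hu Hv. rewrite ext_LC, !Hid; auto.
Qed.

Lemma ext_eq_comp {M1 M2 M3 : MTAlg} (phi : M1 -> M3) (g : M2 -> M3) (f : M1 -> M2) :
  P1 phi -> proximity f -> proximity g -> (forall u, is_open u -> phi u = g (f u)) ->
  forall a, ext phi a = prox_comp g f a.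
Proof.
  intros H Hf Hg Hc a. rewrite P4_ext by auto. unfold prox_comp. apply (LCsup_ext _ (fun x => g (f x))).
  intros u v Hu Hv. rewrite ext_LC, comp_LC, !Hc; auto.
Qed.

Lemma er_top {L : Frame} (E : Emb L) : er E top = ftop.
Proof. rewrite <- (emb_top _ E). apply er_emb. Qed.
Lemma er_meet {L : Frame} (E : Emb L) (a b : MTof E) : is_open a -> is_open b ->
  er E (meet a b) = fmeet (er E a) (er E b).
Proof.
  intros Ha Hb. rewrite <- (MTof_open_inv E a Ha) at 1. rewrite <- (MTof_open_inv E b Hb) at 1.
  simpl. rewrite <- emb_meet. apply er_emb.
Qed.
Lemma er_Sup {L : Frame} (E : Emb L) (S : MTof E -> Prop) : (forall s, S s -> is_open s) ->
  er E (Sup S) = fSup (img (er E) S).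
Proof.
  intros HS. assert (Eq : Sup S = emb E (fSup (img (er E) S))).
  { rewrite emb_Sup. apply Sup_ext. intros y; split.
    - intros Hy. exists (er E y). split; [exists y; auto|]. symmetry; apply (MTof_open_inv E); auto.
    - intros [u [[s [Hs ->]] ->]]. rewrite (MTof_open_inv E); auto. }
  rewrite Eq. apply er_emb.
Qed.

Definition Omor {M N : MTAlg} (f : M -> N) : OF M -> OF N :=
  fun a => exist _ (box (f (proj1_sig a))) (open_box _).

Lemma Omor_val {M N : MTAlg} (f : M -> N) a : proximity f -> proj1_sig (Omor f a) = f (proj1_sig a).
Proof. intros Hf. simpl. apply (prox_open f Hf). apply (proj2_sig a). Qed.

Lemma Omor_hom {M N : MTAlg} (f : M -> N) : proximity f -> frame_morphism (Omor f).
Proof.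
  intros Hf. pose proof Hf as [[Ho [Ht [Hm HS]]] [H2 _]].
  split; [|split].
  - apply OT_ext. rewrite Omor_val by auto. simpl. exact Ht.
  - intros a b. apply OT_ext. rewrite Omor_val by auto. simpl. rewrite !(prox_open f Hf) by apply proj2_sig. apply H2.
  - intros S. apply OT_ext. rewrite Omor_val by auto. simpl. rewrite HS.
    + apply Sup_ext. intros y; split.
      * intros [x [[s [Hs ->]] ->]]. exists (Omor f s). split; [exists s; auto|]. symmetry; apply Omor_val; auto.
      * intros [t [[s [Hs ->]] ->]]. exists (proj1_sig s). split; [exists s; auto| apply Omor_val; auto].
    + intros s [t [_ ->]]. apply proj2_sig.
Qed.

Lemma Omor_id (M : MTAlg) (a : OF M) : Omor (prox_id M) a = a.
Proof. apply OT_ext. simpl. rewrite prox_id_open by apply proj2_sig. apply proj2_sig. Qed.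

Lemma Omor_cmp {M1 M2 M3 : MTAlg} (g : M2 -> M3) (f : M1 -> M2) a :
  proximity f -> proximity g -> Omor (prox_comp g f) a = Omor g (Omor f a).
Proof.
  intros Hf Hg. apply OT_ext. simpl. rewrite comp_open by (auto; apply proj2_sig).
  rewrite (prox_open f Hf) by apply proj2_sig. reflexivity.
Qed.

Definition OFun : Functor MTP Frm.
Proof.
  refine (@Build_Functor MTP Frm OF (fun A B f => Omor f) _ _ _ _).
  - intros A B f Hf. apply Omor_hom; auto.
  - intros A B f g _ _ H a. apply OT_ext. simpl. rewrite H. reflexivity.
  - intros A a. apply Omor_id.
  - intros A B C f g Hf Hg a. apply Omor_cmp; auto.
Defined.

Definition OTD : Functor TDMTP Frm.
Proof.
  refine (@Build_Functor TDMTP Frm (fun M => OF (proj1_sig M)) (fun A B f => Omor f) _ _ _ _).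
  - intros A B f Hf. apply Omor_hom; auto.
  - intros A B f g _ _ H a. apply OT_ext. simpl. rewrite H. reflexivity.
  - intros A a. apply Omor_id.
  - intros A B C f g Hf Hg a. apply Omor_cmp; auto.
Defined.

Lemma fSup_ext {L : Frame} (S T : L -> Prop) : (forall x, S x <-> T x) -> fSup S = fSup T.
Proof. intros H. apply fle_antisym; apply fSup_e; intros s Hs; apply fSup_ub; apply H; auto. Qed.

Lemma fm_id (L : Frame) : frame_morphism (fun a : L => a).
Proof.
  split; [reflexivity| split; [reflexivity|]]. intros S. apply fSup_ext. intros x; split.
  - intros Hx; exists x; auto.
  - intros [y [Hy ->]]; auto.
Qed.
Lemma fm_comp {L1 L2 L3 : Frame} (f : L1 -> L2) (g : L2 -> L3) :
  frame_morphism f -> frame_morphism g -> frame_morphism (fun a => g (f a)).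
Proof.
  intros [Ft [Fm FS]] [Gt [Gm GS]]. split; [|split].
  - rewrite Ft; auto.
  - intros a b. rewrite Fm, Gm; auto.
  - intros S. rewrite FS, GS. apply fSup_ext. intros x; split.
    + intros [y [[z [Hz ->]] ->]]. exists z; auto.
    + intros [z [Hz ->]]. exists (f z). split; [exists z; auto| auto].
Qed.

Definition phiK {L L' : Frame} (h : L -> L') : ML L -> ML L' := fun a => eL (h (er (EmbL L) a)).

Lemma phiK_P1 {L L' : Frame} (h : L -> L') : frame_morphism h -> P1 (phiK h).
Proof.
  intros [Ht [Hm HS]]. split; [|split; [|split]].
  - intros a _. apply (MTof_open (EmbL L')).
  - unfold phiK. rewrite (er_top (EmbL L) : er (EmbL L) (@top (ML L)) = ftop), Ht. apply eL_top.
  - intros a b Ha Hb. unfold phiK. rewrite (er_meet (EmbL L)) by auto. rewrite Hm. apply eL_meet.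
  - intros S HSo. unfold phiK. rewrite (er_Sup (EmbL L)) by auto. rewrite HS, eL_Sup.
    apply Sup_ext. intros y; split.
    + intros [u [[v [[s [Hs ->]] ->]] ->]]. exists s; auto.
    + intros [s [Hs ->]]. exists (h (er (EmbL L) s)). split; [|reflexivity].
      exists (er (EmbL L) s). split; [exists s; auto| reflexivity].
Qed.

Definition KFun : Functor Frm TDMTP.
Proof.
  refine (@Build_Functor Frm TDMTP (fun L => exist _ (ML L) (ML_TD L)) (fun A B h => ext (phiK h)) _ _ _ _).
  - intros A B h Hh. simpl. apply ext_proximity, phiK_P1; auto.
  - intros A B f g _ _ H a. simpl.
    assert (E : phiK f = phiK g) by (apply functional_extensionality; intros x; unfold phiK; rewrite H; reflexivity).
    rewrite E. reflexivity.
  - intros A a. simpl. apply (@ext_eq_id (ML A)).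
    + apply phiK_P1, fm_id.
    + intros u Hu. unfold phiK. apply (MTof_open_inv (EmbL A)); auto.
  - intros A B C f g Hf Hg a. simpl. apply (@ext_eq_comp (ML A) (ML B) (ML C)).
    + apply phiK_P1, fm_comp; auto.
    + apply ext_proximity, phiK_P1; auto.
    + apply ext_proximity, phiK_P1; auto.
    + intros u Hu. rewrite (ext_open (phiK f)) by (auto; apply phiK_P1; auto).
      rewrite (ext_open (phiK g)); [| apply phiK_P1; auto| apply (MTof_open (EmbL B))].
      unfold phiK. rewrite (er_emb (EmbL B) (f (er (EmbL A) u)) : er (EmbL B) (eL (f (er (EmbL A) u))) = _). reflexivity.
Defined.

Definition phi1 (M : MTAlg) : ML (OF M) -> M := fun a => proj1_sig (er (EmbL (OF M)) a).
Definition pk (M : MTAlg) (a : M) : OF M := exist _ (box a) (open_box a).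
Definition phi2 (M : MTAlg) : M -> ML (OF M) := fun a => eL (pk M a).

Lemma pk_val (M : MTAlg) (w : OF M) : pk M (proj1_sig w) = w.
Proof. apply OT_ext. simpl. apply (proj2_sig w). Qed.

Lemma phi1_P1 (M : MTAlg) : P1 (phi1 M).
Proof.
  split; [|split; [|split]].
  - intros a _. unfold phi1. apply proj2_sig.
  - unfold phi1. rewrite (er_top (EmbL (OF M)) : er (EmbL (OF M)) (@top (ML (OF M))) = ftop). reflexivity.
  - intros a b Ha Hb. unfold phi1. rewrite (er_meet (EmbL (OF M))) by auto. reflexivity.
  - intros S HSo. unfold phi1. rewrite (er_Sup (EmbL (OF M))) by auto. simpl.
    apply Sup_ext. intros y; split.
    + intros [w [[s [Hs ->]] ->]]. exists s; auto.
    + intros [s [Hs ->]]. exists (er (EmbL (OF M)) s). split; [exists s; auto| reflexivity].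
Qed.

Lemma phi2_P1 (M : MTAlg) : P1 (phi2 M).
Proof.
  split; [|split; [|split]].
  - intros a _. apply (MTof_open (EmbL (OF M))).
  - unfold phi2. replace (pk M top) with (@ftop (OF M)) by (apply OT_ext; simpl; symmetry; apply box_top).
    apply eL_top.
  - intros a b Ha Hb. unfold phi2.
    replace (pk M (meet a b)) with (@fmeet (OF M) (pk M a) (pk M b)) by (apply OT_ext; simpl; symmetry; apply box_meet).
    apply eL_meet.
  - intros S HSo. unfold phi2.
    replace (pk M (Sup S)) with (@fSup (OF M) (img (pk M) S)).
    + rewrite eL_Sup. apply Sup_ext. intros y; split.
      * intros [w [[s [Hs ->]] ->]]. exists s; auto.
      * intros [s [Hs ->]]. exists (pk M s). split; [exists s; auto| reflexivity].
    + apply OT_ext. simpl. rewrite (open_Sup S HSo). apply Sup_ext. intros y; split.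
      * intros [w [[s [Hs ->]] ->]]. simpl. rewrite (HSo s Hs). auto.
      * intros Hy. exists (pk M y). split; [exists y; auto| simpl; symmetry; apply HSo; auto].
Qed.

Definition eps (M : MTAlg) : ML (OF M) -> M := ext (phi1 M).
Definition epsinv (M : MTAlg) : M -> ML (OF M) := ext (phi2 M).

Lemma eps_prox (M : MTAlg) : proximity (eps M).
Proof. apply ext_proximity, phi1_P1. Qed.
Lemma epsinv_prox (M : MTAlg) : proximity (epsinv M).
Proof. apply ext_proximity, phi2_P1. Qed.

Lemma eps_iso1 (M : MTAlg) : forall a, prox_comp (epsinv M) (eps M) a = prox_id (ML (OF M)) a.
Proof.
  apply comp_id; [apply eps_prox| apply epsinv_prox|].
  intros u Hu. unfold eps, epsinv. rewrite (ext_open (phi1 M)) by (auto; apply phi1_P1).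
  rewrite (ext_open (phi2 M)); [|apply phi2_P1| unfold phi1; apply proj2_sig].
  unfold phi2, phi1. rewrite pk_val. apply (MTof_open_inv (EmbL (OF M))); auto.
Qed.

Lemma eps_iso2 (M : MTAlg) : forall a, prox_comp (eps M) (epsinv M) a = prox_id M a.
Proof.
  apply comp_id; [apply epsinv_prox| apply eps_prox|].
  intros u Hu. unfold eps, epsinv. rewrite (ext_open (phi2 M)) by (auto; apply phi2_P1).
  rewrite (ext_open (phi1 M)); [|apply phi1_P1| apply (MTof_open (EmbL (OF M)))].
  unfold phi2, phi1. rewrite (er_emb (EmbL (OF M)) (pk M u) : er (EmbL (OF M)) (eL (pk M u)) = _).
  simpl. exact Hu.
Qed.

Lemma eps_nat {M N : MTAlg} (f : M -> N) : proximity f ->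
  forall a, prox_comp f (eps M) a = prox_comp (eps N) (ext (phiK (Omor f))) a.
Proof.
  intros Hf. apply comp_eq; [apply eps_prox| auto| apply ext_proximity, phiK_P1, Omor_hom; auto| apply eps_prox|].
  intros u Hu. unfold eps.
  rewrite (ext_open (phi1 M)) by (auto; apply phi1_P1).
  rewrite (ext_open (phiK (Omor f))) by (auto; apply phiK_P1, Omor_hom; auto).
  rewrite (ext_open (phi1 N)); [|apply phi1_P1| apply (MTof_open (EmbL (OF N)))].
  unfold phiK, phi1.
  rewrite (er_emb (EmbL (OF N)) _ : er (EmbL (OF N)) (eL (Omor f (er (EmbL (OF M)) u))) = _).
  symmetry. apply Omor_val; auto.
Qed.

Definition etaF (L : Frame) : OF (ML L) -> L := fun a => er (EmbL L) (proj1_sig a).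
Definition etaFinv (L : Frame) : L -> OF (ML L) := fun u => exist _ (eL u) (MTof_open (EmbL L) u).

Lemma etaF_hom (L : Frame) : frame_morphism (etaF L).
Proof.
  split; [|split].
  - unfold etaF. simpl. apply (er_top (EmbL L) : er (EmbL L) (@top (ML L)) = ftop).
  - intros a b. unfold etaF. simpl. apply (er_meet (EmbL L)); apply proj2_sig.
  - intros S. unfold etaF.
    change (er (EmbL L) (@Sup (ML L) (Oimg S)) = fSup (img (fun a : OF (ML L) => er (EmbL L) (proj1_sig a)) S)).
    assert (HO : forall s : ML L, Oimg S s -> is_open s) by (intros s [t [_ ->]]; apply proj2_sig).
    rewrite (er_Sup (EmbL L) (Oimg S) HO : er (EmbL L) (@Sup (ML L) (Oimg S)) = _).
    apply fSup_ext. intros x; split.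
      * intros [y [[s [Hs ->]] ->]]. exists s; auto.
      * intros [s [Hs ->]]. exists (proj1_sig s). split; [exists s; auto| reflexivity].
Qed.

Lemma etaFinv_hom (L : Frame) : frame_morphism (etaFinv L).
Proof.
  split; [|split].
  - apply OT_ext. simpl. apply eL_top.
  - intros a b. apply OT_ext. simpl. apply eL_meet.
  - intros S. apply OT_ext.
    change (eL (fSup S) = @Sup (ML L) (Oimg (img (etaFinv L) S))). rewrite eL_Sup. apply Sup_ext. intros y; split.
    + intros [u [Hu ->]]. exists (etaFinv L u). split; [exists u; auto| reflexivity].
    + intros [w [[u [Hu ->]] ->]]. exists u; auto.
Qed.

Definition G1 : Functor MTP TDMTP.
Proof.
  refine (@Build_Functor MTP TDMTP (fun M => exist _ (ML (OF M)) (ML_TD (OF M)))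
            (fun A B f => ext (phiK (Omor f))) _ _ _ _).
  - intros A B f Hf. simpl. apply ext_proximity, phiK_P1, Omor_hom; auto.
  - intros A B f g _ _ H a. simpl.
    assert (E : Omor f = Omor g) by (apply functional_extensionality; intros x; apply OT_ext; simpl; rewrite H; reflexivity).
    rewrite E. reflexivity.
  - intros A a. simpl.
    assert (E : Omor (prox_id A) = fun x => x) by (apply functional_extensionality; intros x; apply Omor_id).
    rewrite E. exact (fmor_id KFun (OF A) a).
  - intros A B C f g Hf Hg a. simpl.
    assert (E : Omor (prox_comp g f) = fun x => Omor g (Omor f x))
      by (apply functional_extensionality; intros x; apply Omor_cmp; auto).
    rewrite E. exact (fmor_cmp KFun (OF A) (OF B) (OF C) (Omor f) (Omor g) (Omor_hom f Hf) (Omor_hom g Hg) a).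
Defined.

Theorem theorem4p18 :
  is_equivalence incl_TD /\ equivalent Frm TDMTP.
Proof.
  split.
  - exists G1. split.
    + exists (fun A => eps (proj1_sig A)). split.
      * intros A. split; [apply eps_prox|]. exists (epsinv (proj1_sig A)).
        split; [apply epsinv_prox|]. split; [exact (eps_iso1 _)| exact (eps_iso2 _)].
      * intros A B f Hf. exact (eps_nat f Hf).
    + exists (fun A => eps A). split.
      * intros A. split; [apply eps_prox|]. exists (epsinv A).
        split; [apply epsinv_prox|]. split; [exact (eps_iso1 _)| exact (eps_iso2 _)].
      * intros A B f Hf. exact (eps_nat f Hf).
  - exists KFun. exists OTD. split.
    + exists etaF. split.
      * intros L. split; [apply etaF_hom|]. exists (etaFinv L). split; [apply etaFinv_hom|].
        split.
        -- intros a. apply OT_ext. simpl. apply (MTof_open_inv (EmbL L)). apply proj2_sig.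
        -- intros u. simpl. unfold etaF. simpl. apply (er_emb (EmbL L)).
      * intros L L' h Hh a. simpl. unfold etaF.
        rewrite Omor_val by (apply ext_proximity, phiK_P1; auto).
        rewrite (ext_open (phiK h)); [|apply phiK_P1; auto| apply proj2_sig].
        unfold phiK. symmetry. apply (er_emb (EmbL L')).
    + exists (fun A => eps (proj1_sig A)). split.
      * intros A. split; [apply eps_prox|]. exists (epsinv (proj1_sig A)).
        split; [apply epsinv_prox|]. split; [exact (eps_iso1 _)| exact (eps_iso2 _)].
      * intros A B f Hf. exact (eps_nat f Hf).
Qed.
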